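(* Let $B_n$ be the closed Euclidean unit ball in $\mathbf{R}^n$ and $S^{n-1} = \partial B_n$. Let $\mathcal{E}$ be an ellipsoid such that $\mathcal{E} \subset B_n$. Then $\mathcal{E} \cap S^{n-1}$ is a subsphere.
   Context: An ellipsoid is a subset of $\mathbf{R}^n$ of the form $\Theta(B_n)$ where $\Theta : \mathbf{R}^n \to \mathbf{R}^n$ is an affine map (possibly non-injective). A subset $A \subset S^{n-1}$ is a subsphere if $A = S^{n-1} \cap \mathrm{aff}(A)$, where $\mathrm{aff}(A)$ is the affine subspace generated by $A$ (so the empty set is a subsphere). *)

(* Defs.v *)
From HB Require Import structures.
From mathcomp Require Import all_boot all_order all_algebra.
From mathcomp Require Import boolp classical_sets reals.
Set Implicit Arguments. Unset Strict Implicit. Unset Printing Implicit Defensive.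
Import Order.TTheory GRing.Theory Num.Theory.
Local Open Scope ring_scope.
Local Open Scope classical_set_scope.

Definition sqnorm (R : realType) (n : nat) (x : 'rV[R]_n) : R :=
  \sum_(i < n) x ord0 i ^+ 2.

Definition ball_n (R : realType) (n : nat) : set 'rV[R]_n :=
  [set x | sqnorm x <= 1].

Definition sphere_n (R : realType) (n : nat) : set 'rV[R]_n :=
  [set x | sqnorm x = 1].

(* an affine map R^n -> R^n (possibly non-injective): x |-> x A + b *)
Definition affine_map (R : realType) (n : nat) (A : 'M[R]_n) (b : 'rV[R]_n)
  (x : 'rV[R]_n) : 'rV[R]_n := x *m A + b.

Definition ellipsoid (R : realType) (n : nat) (A : 'M[R]_n) (b : 'rV[R]_n)
  : set 'rV[R]_n := [set affine_map A b x | x in @ball_n R n].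

Definition aff (R : realType) (n : nat) (S : set 'rV[R]_n) : set 'rV[R]_n :=
  [set y | exists (k : nat) (c : 'I_k -> R) (a : 'I_k -> 'rV[R]_n),
      (forall i, S (a i)) /\ \sum_(i < k) c i = 1 /\ y = \sum_(i < k) c i *: a i].

Definition subsphere (R : realType) (n : nat) (S : set 'rV[R]_n) : Prop :=
  S = @sphere_n R n `&` aff S.

(* Main.v *)
Require Import Defs.
From HB Require Import structures.
From mathcomp Require Import all_boot all_order all_algebra.
From mathcomp Require Import boolp classical_sets reals.
From mathcomp Require Import ring lra.
Import Order.TTheory GRing.Theory Num.Theory.
Local Open Scope ring_scope.
Local Open Scope classical_set_scope.
Set Implicit Arguments. Unset Strict Implicit. Unset Printing Implicit Defensive.

Section Dot.
Variables (R : realType) (n : nat).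
Implicit Types (u v w : 'rV[R]_n).

Definition dotv u v : R := (u *m v^T) ord0 ord0.

Lemma sqnormE u : sqnorm u = dotv u u.
Proof. by rewrite /sqnorm /dotv mxE; apply: eq_bigr => i _; rewrite mxE expr2. Qed.

Lemma dotC u v : dotv u v = dotv v u.
Proof. by rewrite /dotv -[v *m u^T]trmxK trmx_mul !trmxK [in RHS]mxE. Qed.

Lemma dotDl u v w : dotv (u + v) w = dotv u w + dotv v w.
Proof. by rewrite /dotv mulmxDl mxE. Qed.

Lemma dotZl (a : R) u v : dotv (a *: u) v = a * dotv u v.
Proof. by rewrite /dotv -scalemxAl mxE. Qed.

Lemma dotNl u v : dotv (- u) v = - dotv u v.
Proof. by rewrite -scaleN1r dotZl mulN1r. Qed.

Lemma dotBl u v w : dotv (u - v) w = dotv u w - dotv v w.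
Proof. by rewrite dotDl dotNl. Qed.

Lemma dotDr u v w : dotv w (u + v) = dotv w u + dotv w v.
Proof. by rewrite !(dotC w) dotDl. Qed.

Lemma dotZr (a : R) u v : dotv v (a *: u) = a * dotv v u.
Proof. by rewrite !(dotC v) dotZl. Qed.

Lemma dotBr u v w : dotv w (u - v) = dotv w u - dotv w v.
Proof. by rewrite !(dotC w) dotBl. Qed.

Lemma dot0l u : dotv 0 u = 0.
Proof. by rewrite /dotv mul0mx mxE. Qed.

Lemma dotMl (A : 'M[R]_n) u v : dotv (u *m A) v = dotv u (v *m A^T).
Proof. by rewrite /dotv trmx_mul trmxK mulmxA. Qed.

Lemma dot_ge0 u : 0 <= dotv u u.
Proof. rewrite -sqnormE; apply: sumr_ge0 => i _; exact: sqr_ge0. Qed.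

Lemma dot_eq0 u : dotv u u = 0 -> u = 0.
Proof.
rewrite -sqnormE => H; apply/matrixP => i j; rewrite (ord1 i) mxE.
have := psumr_eq0P (fun k _ => sqr_ge0 (u ord0 k)) H; move/(_ j isT).
by move/eqP; rewrite sqrf_eq0 => /eqP.
Qed.

Lemma dot_sum u v : dotv (u + v) (u + v) = dotv u u + 2 * dotv u v + dotv v v.
Proof. rewrite !dotDl !dotDr (dotC v u); ring. Qed.

End Dot.

Section Aux.
Variables (R : realType) (n : nat).
Implicit Types (u v w : 'rV[R]_n).
Lemma dotNr u v : dotv v (- u) = - dotv v u.
Proof. by rewrite dotC dotNl dotC. Qed.
Lemma dot0r u : dotv u 0 = 0.
Proof. by rewrite dotC dot0l. Qed.
Lemma dot_sub u v : dotv (u - v) (u - v) = dotv u u - 2 * dotv u v + dotv v v.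
Proof. rewrite dot_sum !dotNr !dotNl ?opprK; ring. Qed.
Lemma close (y z : 'rV[R]_n) : dotv y y = 1 -> dotv z z <= 1 -> 1 <= dotv y z -> z = y.
Proof.
move=> hy hz hyz; have h0 := dot_ge0 (y - z).
have : dotv (y - z) (y - z) = 0 by apply/eqP; rewrite eq_le h0 andbT dot_sub; lra.
by move/dot_eq0/subr0_eq.
Qed.
End Aux.

Section Main.
Variables (R : realType) (n : nat) (A : 'M[R]_n) (b : 'rV[R]_n).
Hypothesis hE : forall x, dotv x x <= 1 -> dotv (x *m A + b) (x *m A + b) <= 1.
Implicit Types (u v w x : 'rV[R]_n).

Lemma allE (q0 y : 'rV[R]_n) : dotv q0 q0 <= 1 -> q0 *m A + b = y -> dotv y y = 1 ->
  y *m A^T = 0 -> forall x, dotv x x <= 1 -> x *m A + b = y.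
Proof.
move=> hq0 hy hyy hv x hx; apply: close => //; first exact: hE.
have e : forall x', dotv y (x' *m A + b) = dotv y b.
  by move=> x'; rewrite dotDr (dotC y (x' *m A)) dotMl hv dot0r add0r.
by rewrite e -(e q0) hy hyy.
Qed.

Variables (q y : 'rV[R]_n) (s : R).
Hypotheses (hq : dotv q q = 1) (hqy : q *m A + b = y) (hyy : dotv y y = 1)
  (hv : y *m A^T = s *: q) (hs : 0 < s).

Definition M := s%:M - A *m A^T.
Definition P u := dotv (u *m M) u.

Lemma PE u : P u = s * dotv u u - dotv (u *m A) (u *m A).
Proof. by rewrite /P /M mulmxBr mul_mx_scalar mulmxA dotBl dotZl (dotMl (A^T)) trmxK. Qed.

Lemma hid' w : 1 - dotv ((q + w) *m A + b) ((q + w) *m A + b) - s * (1 - dotv (q + w) (q + w)) = P w.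
Proof.
rewrite mulmxDl (addrAC (q *m A)) hqy !dot_sum PE hyy hq.
have -> : dotv y (w *m A) = s * dotv q w by rewrite dotC dotMl hv dotZr dotC.
ring.
Qed.

Lemma hid x : 1 - dotv (x *m A + b) (x *m A + b) - s * (1 - dotv x x) = P (x - q).
Proof. by rewrite -hid' (addrC q) subrK. Qed.

Lemma PZ (t : R) w : P (t *: w) = t ^+ 2 * P w.
Proof. rewrite !PE -scalemxAl !dotZl !dotZr; ring. Qed.

Lemma PN w : P (- w) = P w.
Proof. by rewrite -scaleN1r PZ sqrrN expr1n mul1r. Qed.

Lemma Ppol u v : P (u + v) + P (u - v) = 2 * P u + 2 * P v.
Proof. rewrite !PE mulmxDl mulmxBl !dot_sub !dot_sum; ring. Qed.

Lemma Punit x : dotv x x = 1 -> 0 <= P (x - q).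
Proof. move=> hx; rewrite -hid hx; have := hE (x := x); rewrite hx lexx => /(_ isT); lra. Qed.

Lemma Pneg w : dotv q w < 0 -> 0 <= P w.
Proof.
move=> hw.
have Nw : 0 < dotv w w.
  rewrite lt_def dot_ge0 andbT; apply/eqP => /dot_eq0 w0.
  by move: hw; rewrite w0 dot0r ltxx.
set t := - (2 * dotv q w) / dotv w w.
have tpos : 0 < t by rewrite /t divr_gt0 //; lra.
have hx : dotv (q + t *: w) (q + t *: w) = 1.
  rewrite dot_sum dotZr dotZl dotZr hq /t; field; lra.
have := Punit hx; rewrite (addrC q) addrK PZ pmulr_rge0 //; exact: exprn_gt0.
Qed.

Lemma Ppos w : 0 < dotv q w -> 0 <= P w.
Proof. by move=> hw; rewrite -PN; apply: Pneg; rewrite dotNr; lra. Qed.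

Lemma Pge0 w : 0 <= P w.
Proof.
case: (ltgtP (dotv q w) 0) => h; first exact: Pneg; first exact: Ppos.
have Pq : 0 <= P q by apply: Ppos; rewrite hq.
have key : forall e, 0 < e -> 0 <= P w + e ^+ 2 * P q.
  move=> e he.
  have h1 : 0 <= P (w + e *: q) by apply: Ppos; rewrite dotDr dotZr hq h; lra.
  have h2 : 0 <= P (w - e *: q) by apply: Pneg; rewrite dotBr dotZr hq h; lra.
  have := Ppol w (e *: q); rewrite PZ; lra.
rewrite leNgt; apply/negP => Pw.
set a := - P w.
have ha : 0 < a by rewrite /a; lra.
set e := a / (a + P q).
have he : 0 < e by rewrite /e divr_gt0 //; lra.
have hea : e * (a + P q) = a by rewrite /e divfK //; apply: lt0r_neq0; lra.
have h3 : e ^+ 2 * P q < a by nra.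
have := key e he; rewrite /a in h3; lra.
Qed.

Lemma Msym : M^T = M.
Proof. by rewrite /M linearB /= tr_scalar_mx trmx_mul trmxK. Qed.

Lemma symM v w : dotv (v *m M) w = dotv (w *m M) v.
Proof. by rewrite dotC dotMl Msym. Qed.

Lemma Pexp u v t : P (u + t *: v) = P u + 2 * t * dotv (u *m M) v + t ^+ 2 * P v.
Proof. rewrite /P mulmxDl -scalemxAl !dotDl !dotDr !dotZl !dotZr (symM v u); ring. Qed.

Lemma Pzero u : P u = 0 -> u *m M = 0.
Proof.
move=> Pu; apply: dot_eq0.
set G := dotv (u *m M) (u *m M).
have hG : 0 <= G := dot_ge0 (u *m M).
have hQ := Pge0 (u *m M).
set Q := P (u *m M) in hQ.
set t := - G / (Q + 1).
have ht : t * (Q + 1) = - G by rewrite /t divfK //; apply: lt0r_neq0; lra.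
have h := Pge0 (u + t *: (u *m M)); rewrite Pexp Pu -/G -/Q in h.
nra.
Qed.
End Main.


Lemma key (R : realType) (n : nat) (A : 'M[R]_n) (b : 'rV[R]_n)
  (hE0 : ellipsoid A b `<=` @ball_n R n) k (c : 'I_k -> R) (a : 'I_k -> 'rV[R]_n) :
  (forall i, ellipsoid A b (a i) /\ sphere_n (a i)) -> \sum_(i < k) c i = 1 ->
  sphere_n (\sum_(i < k) c i *: a i) -> ellipsoid A b (\sum_(i < k) c i *: a i).
Proof.
have hE : forall x, dotv x x <= 1 -> dotv (x *m A + b) (x *m A + b) <= 1.
  move=> x hx; rewrite -sqnormE; apply: hE0; exists x => //.
  by rewrite /ball_n /= sqnormE.
case: k c a => [|k] c a Ha Hc Hz.
  by move: Hc; rewrite big_ord0 => /esym/eqP; rewrite oner_eq0.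
have [[q0 hq0 hy] hyy] := Ha ord0.
rewrite /ball_n /= sqnormE in hq0; rewrite /sphere_n /= sqnormE in hyy.
rewrite /affine_map in hy.
set y := a ord0 in hy hyy.
have /choice [xs Hxs] : forall i, exists x : 'rV[R]_n,
    dotv x x <= 1 /\ x *m A + b = a i.
  move=> i; have [[x hx hxa] _] := Ha i; exists x.
  by rewrite -sqnormE; split.
set z := \sum_(i < k.+1) c i *: a i.
set X := \sum_(i < k.+1) c i *: xs i.
have hX : X *m A + b = z.
  have -> : z = \sum_(i < k.+1) (c i *: (xs i *m A) + c i *: b).
    by apply: eq_bigr => i _; rewrite -(proj2 (Hxs i)) scalerDr.
  rewrite big_split /= -scaler_suml Hc scale1r mulmx_suml; congr (_ + _).
  by apply: eq_bigr => i _; rewrite scalemxAl.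
have hzz : dotv z z = 1 by rewrite -sqnormE.
case: (eqVneq (y *m A^T) 0) => hv0.
  have ey : forall i, a i = y.
    move=> i; rewrite -(proj2 (Hxs i)); apply: (allE hE hq0 hy hyy hv0).
    exact: (proj1 (Hxs i)).
  have -> : z = y.
    rewrite /z (eq_bigr (fun i => c i *: y)); last by move=> i _; rewrite ey.
    by rewrite -scaler_suml Hc scale1r.
  exact: (proj1 (Ha ord0)).
set v := y *m A^T in hv0.
have Nv : 0 < dotv v v.
  rewrite lt_def dot_ge0 andbT; apply/eqP => /dot_eq0; exact/eqP.
set s := Num.sqrt (dotv v v).
have hs : 0 < s by rewrite /s sqrtr_gt0.
have hs2 : s ^+ 2 = dotv v v by rewrite /s sqr_sqrtr // ltW.
set q := s^-1 *: v.
have hq : dotv q q = 1.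
  rewrite /q dotZl dotZr -hs2; field; exact: lt0r_neq0.
have hv : y *m A^T = s *: q by rewrite /q scalerA mulfV ?scale1r //; exact: lt0r_neq0.
have hqq0 : dotv q0 q <= 1.
  have := dot_ge0 (q - q0); rewrite dot_sub hq (dotC q q0); lra.
have hqy : q *m A + b = y.
  apply: (close hyy); first by apply: hE; rewrite hq.
  have e1 : dotv y (q *m A) = s by rewrite dotC dotMl hv dotZr hq mulr1.
  have e2 : dotv y (q0 *m A) = s * dotv q0 q by rewrite dotC dotMl hv dotZr.
  have : dotv y y = dotv y (q0 *m A) + dotv y b by rewrite -{2}hy dotDr.
  rewrite dotDr e1 e2 hyy => h.
  have : s * dotv q0 q <= s by rewrite -[X in _ <= X]mulr1 ler_pM2l.
  lra.
have P0 : forall i, (xs i - q) *m M A s = 0.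
  move=> i; apply: (Pzero hE hq hqy hyy hv).
  have := hid hq hqy hyy hv (xs i); rewrite (proj2 (Hxs i)).
  have [_ hai] := Ha i; rewrite /sphere_n /= sqnormE in hai; rewrite hai.
  have := Pge0 hE hq hqy hyy hv (xs i - q).
  have := proj1 (Hxs i).
  nra.
have hXq : (X - q) *m M A s = 0.
  have -> : X - q = \sum_(i < k.+1) c i *: (xs i - q).
    rewrite (eq_bigr (fun i => c i *: xs i - c i *: q)); last by move=> i _; rewrite scalerBr.
    by rewrite sumrB -scaler_suml Hc scale1r.
  rewrite mulmx_suml big1 // => i _; by rewrite -scalemxAl P0 scaler0.
have := hid hq hqy hyy hv X; rewrite /P hXq dot0l hX hzz => h.
have hXX : dotv X X = 1 by nra.
exists X; last by rewrite /affine_map hX.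
by rewrite /ball_n /= sqnormE hXX.
Qed.

Unset Implicit Arguments.
Set Strict Implicit.

Theorem lemma5 (R : realType) (n : nat) (A : 'M[R]_n) (b : 'rV[R]_n) :
  ellipsoid A b `<=` @ball_n R n ->
  subsphere (ellipsoid A b `&` @sphere_n R n).
Proof.
move=> hE; rewrite /subsphere; apply/seteqP; split.
  move=> z [Ez Sz]; split => //.
  exists 1%N, (fun _ => 1), (fun _ => z); split; first by move=> i; split.
  by rewrite !big_ord1 scale1r.
move=> z [Sz [k [c [a [Ha [Hc Hz]]]]]]; split => //.
rewrite Hz; apply: key => //; by rewrite -Hz.
Qed.
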